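(* Let $k$ be odd, $n=4k$, $d=\frac{(3^{2k}+1)^2}{20}$, $a\in\mathrm{GF}(3^n)^*$, and $r$ a nonsquare in $\mathrm{GF}(3^4)$. Regard $$q_1(x)=\mathrm{Tr}_1^n\big(a x^{3^{2(k+1)}+1}-x^{3^{2k}+1}\big),\qquad q_2(x)=\mathrm{Tr}_1^n\big(a r x^{3^{2(k+1)}+1}-r^{d}x^{3^{2k}+1}\big)$$ as quadratic forms in $n$ variables over $\mathrm{GF}(3)$ (via coordinates with respect to a basis of $\mathrm{GF}(3^n)$ over $\mathrm{GF}(3)$). Then the rank of $q_1$ is one of $n$, $n-2$, $n-4$, and the rank of $q_2$ equals $n$.
   Context: $\mathrm{Tr}_1^n(x)=x+x^3+\cdots+x^{3^{n-1}}$ is the absolute trace from $\mathrm{GF}(3^n)$ to $\mathrm{GF}(3)$. Writing $x=\sum_{i=1}^n x_i\alpha_i$ for a fixed basis $\{\alpha_1,\dots,\alpha_n\}$ of $\mathrm{GF}(3^n)$ over $\mathrm{GF}(3)$, each $q_j$ becomes a quadratic form in $x_1,\dots,x_n$ with coefficients in $\mathrm{GF}(3)$; its rank is the minimal number of variables it depends on after an invertible linear change of variables, equivalently $n-\dim_{\mathrm{GF}(3)}\{y: q_j(x+y)=q_j(x)\ \forall x\}$. *)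

(* Defs.v *)
From HB Require Import structures.
From mathcomp Require Import all_boot all_order all_algebra all_field.
Set Implicit Arguments. Unset Strict Implicit. Unset Printing Implicit Defensive.
Import GRing.Theory.
Local Open Scope ring_scope.

Definition tr3 (F : finFieldType) (n : nat) (x : F) : F :=
  \sum_(i < n) x ^+ (3 ^ i).

Definition qrad (F : finFieldType) (q : F -> F) : {set F} :=
  [set y | [forall x, q (x + y) == q x]].

(* Rank of q = n - dim_GF(3) (radical); the dimension of a finite
   GF(3)-subspace is log_3 of its cardinality. *)
Definition qrank (F : finFieldType) (n : nat) (q : F -> F) : nat :=
  (n - logn 3 #|qrad q|)%N.

(* Main.v *)
Require Import Defs.
From HB Require Import structures.
From mathcomp Require Import all_boot all_order all_algebra all_field.
From mathcomp Require Import all_fingroup all_solvable ring lra zify.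
Import GRing.Theory.
Local Open Scope ring_scope.
Set Implicit Arguments. Unset Strict Implicit.
Lemma frobD (F : finFieldType) (h3 : 3%N \in [pchar F]) i (x y : F) :
  (x+y)^+(3^i) = x^+(3^i) + y^+(3^i).
Proof.
apply: exprDn_pchar; rewrite pnatX /=. rewrite (pnatE _ (isT : prime 3)) h3 //.
Qed.

Lemma trD (F : finFieldType) (h3 : 3%N \in [pchar F]) n (u v : F) :
  tr3 n (u + v) = tr3 n u + tr3 n v.
Proof. by rewrite /tr3 -big_split /=; apply: eq_bigr => i _; rewrite frobD. Qed.

Lemma tr0 (F : finFieldType) n : tr3 n (0 : F) = 0.
Proof. by rewrite /tr3 big1 // => i _; rewrite expr0n expn_eq0. Qed.

Lemma trN (F : finFieldType) (h3 : 3%N \in [pchar F]) n (u : F) :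
  tr3 n (- u) = - tr3 n u.
Proof. by apply/eqP; rewrite -subr_eq0 opprK -trD // addNr tr0. Qed.

Lemma trB (F : finFieldType) (h3 : 3%N \in [pchar F]) n (u v : F) :
  tr3 n (u - v) = tr3 n u - tr3 n v.
Proof. by rewrite trD // trN. Qed.

Lemma tr_frob (F : finFieldType) n (hN : forall x : F, x ^+ (3 ^ n) = x) (u : F) :
  tr3 n (u ^+ 3) = tr3 n u.
Proof.
case: n hN => [|n] hN; first by rewrite /tr3 !big_ord0.
rewrite /tr3 big_ord_recr big_ord_recl /=.
rewrite -exprM -expnS hN expn0 expr1 addrC; congr (_ + _).
by apply: eq_bigr => i _; rewrite -exprM -expnS.
Qed.

Lemma tr_frobX (F : finFieldType) n (hN : forall x : F, x ^+ (3 ^ n) = x) j (u : F) :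
  tr3 n (u ^+ (3 ^ j)) = tr3 n u.
Proof.
elim: j => [|j IH]; first by rewrite expr1.
by rewrite expnSr exprM tr_frob.
Qed.
Lemma tr_nondeg (F : finFieldType) n (hc : #|F| = (3^n.+1)%N) :
  exists x0 : F, tr3 n.+1 x0 != 0.
Proof.
case: (boolP [exists x : F, tr3 n.+1 x != 0]) => [/existsP //|/existsPn H]; exfalso.
pose p : {poly F} := \sum_(i < n.+1) 'X^(3^i).
have hp x : p.[x] = tr3 n.+1 x.
  by rewrite /p horner_sum /tr3; apply: eq_bigr => i _; rewrite hornerXn.
have hs1 : (size ((\sum_(i < n) 'X^(3^i))%R : {poly F}) < size ('X^(3^n) : {poly F}))%N.
  rewrite size_polyXn ltnS; apply: leq_trans; first exact: size_sum.
  apply/bigmax_leqP => i _; rewrite size_polyXn ltn_exp2l //.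
have hs : size p = (3^n).+1.
  by rewrite /p big_ord_recr /= addrC size_polyDl // size_polyXn.
have p0 : p != 0 by rewrite -size_poly_eq0 hs.
have hall : all (root p) (enum F).
  by apply/allP => x _; rewrite /root hp; apply/eqP; move: (H x); rewrite negbK => /eqP.
have := max_poly_roots p0 hall (enum_uniq _).
by rewrite -cardE hc hs ltnS leqNgt ltn_exp2l // ltnSn.
Qed.

Lemma tr_nondeg2 (F : finFieldType) (h3 : 3%N \in [pchar F]) n (hc : #|F| = (3^n.+1)%N) (c : F) :
  (forall x, tr3 n.+1 (x * c) = 0) -> c = 0.
Proof.
move=> H; apply/eqP; apply/negPn/negP => c0.
have [x0 hx0] := tr_nondeg hc.
by move: hx0; rewrite -(divfK c0 x0) H eqxx.
Qed.
Lemma tr_swap (F : finFieldType) N (hN : forall x : F, x ^+ (3 ^ N) = x) i j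
  (hij : (i + j)%N = N) (c x y : F) :
  tr3 N (c * x ^+ (3 ^ i) * y) = tr3 N (x * (c * y) ^+ (3 ^ j)).
Proof.
rewrite -(tr_frobX hN j (c * x ^+ (3 ^ i) * y)) !exprMn -exprM -expnD hij hN.
congr (tr3 N _); ring.
Qed.

Definition Lmap (F : finFieldType) (A A' B : nat) (c e y : F) :=
  c * y ^+ A + (c * y) ^+ A' - e * y ^+ B - (e * y) ^+ B.

Lemma q_expand (F : finFieldType) (h3 : 3%N \in [pchar F]) N
  (hN : forall x : F, x ^+ (3 ^ N) = x) i j l (hij : (i + j)%N = N) (hl : (l + l)%N = N)
  (c e : F) (q : F -> F)
  (hq : forall x, q x = tr3 N (c * x ^+ (3 ^ i + 1) - e * x ^+ (3 ^ l + 1))) x y :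
  q (x + y) = q x + q y + tr3 N (x * Lmap (3 ^ i) (3 ^ j) (3 ^ l) c e y).
Proof.
have E1 : c * (x + y) ^+ (3 ^ i + 1) - e * (x + y) ^+ (3 ^ l + 1) =
   (c * x ^+ (3 ^ i + 1) - e * x ^+ (3 ^ l + 1)) + (c * y ^+ (3 ^ i + 1) - e * y ^+ (3 ^ l + 1))
   + ((c * x ^+ (3 ^ i) * y + x * (c * y ^+ (3 ^ i))) - (e * x ^+ (3 ^ l) * y + x * (e * y ^+ (3 ^ l)))).
  by rewrite !addn1 !exprSr !frobD //; ring.
have E2 : x * Lmap (3 ^ i) (3 ^ j) (3 ^ l) c e y =
   x * (c * y ^+ (3 ^ i)) + x * (c * y) ^+ (3 ^ j) - x * (e * y ^+ (3 ^ l)) - x * (e * y) ^+ (3 ^ l).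
  by rewrite /Lmap; ring.
rewrite !hq E1 E2 !(trD h3, trN h3) (tr_swap hN hij) (tr_swap hN hl); ring.
Qed.
Lemma exprN_even (F : finFieldType) n (x : F) : ~~ odd n -> (- x) ^+ n = x ^+ n.
Proof. by move=> hn; rewrite exprNn -signr_odd (negbTE hn) expr0 mul1r. Qed.

Lemma pow3_odd i : odd (3 ^ i).
Proof. by rewrite oddX orbT. Qed.

Lemma qrad_eq (F : finFieldType) (h3 : 3%N \in [pchar F]) n (hc : #|F| = (3 ^ n.+1)%N)
  i j l (hij : (i + j)%N = n.+1) (hl : (l + l)%N = n.+1)
  (c e : F) (q : F -> F)
  (hq : forall x, q x = tr3 n.+1 (c * x ^+ (3 ^ i + 1) - e * x ^+ (3 ^ l + 1))) :
  qrad q = [set y | Lmap (3 ^ i) (3 ^ j) (3 ^ l) c e y == 0].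
Proof.
have hN : forall x : F, x ^+ (3 ^ n.+1) = x by move=> x; rewrite -hc expf_card.
have E := q_expand h3 hN hij hl hq.
have q0 : q 0 = 0 by rewrite hq !expr0n !addn1 /= !mulr0 subr0 tr0.
have qN y : q (- y) = q y.
  by rewrite !hq !exprN_even // addn1 /= negbK pow3_odd.
apply/setP => y; rewrite !inE; apply/forallP/eqP.
- move=> H.
  have qy : q y = 0 by move: (H 0); rewrite add0r q0 => /eqP.
  apply: (tr_nondeg2 h3 hc) => x; move: (H x); rewrite E qy addr0 => /eqP.
  by move/(canRL (addKr (q x))); rewrite addNr.
- move=> L0.
  have qy : q y = 0.
    move: (E (- y) y); rewrite addNr q0 L0 mulr0 tr0 addr0 qN => /esym h2.
    have -> : q y = 3%:R * q y - (q y + q y) by ring.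
    by rewrite (pcharf0 h3) h2 mul0r subr0.
  by move=> x; rewrite E L0 mulr0 tr0 qy !addr0.
Qed.
Lemma addgrp_card (F : finFieldType) (K : {set F}) :
  0 \in K -> (forall x y, x \in K -> y \in K -> x + y \in K) -> (#|K| %| #|F|)%N.
Proof.
move=> h0 hD.
have gK : group_set (K : {set F}).
  apply/group_setP; split; first exact: h0.
  by move=> x y xK yK; apply: hD.
have := cardSg (subsetT (Group gK)).
by rewrite cardsT.
Qed.
Lemma neq_scal (F : finFieldType) (a b y : F) : y != 0 -> a != b -> a * y != b * y.
Proof. by move=> y0 ab; apply: contra ab => /eqP /(mulIf y0) ->. Qed.

Lemma two_eq0 (F : finFieldType) : (1 : F) = -1 -> (2 : F) == 0.
Proof. move=> h; apply/eqP. have -> : (2:F) = 1 - (-1) by ring. by rewrite -h subrr. Qed.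

Lemma four_dvd (F : finFieldType) (w : F) (A : {set F}) :
  (2 : F) != 0 -> w ^+ 2 = -1 -> (forall y, y \in A -> w * y \in A) -> 0 \notin A ->
  (4 %| #|A|)%N.
Proof.
move=> h2 hw.
have w1 : w != 1.
  apply: contra (h2) => /eqP h; move: hw; rewrite h expr1n => h'.
  exact: two_eq0 h'.
have wm1 : w != -1.
  apply: contra (h2) => /eqP h; move: hw; rewrite h sqrrN expr1n => h'.
  exact: two_eq0 h'.
have m1 : (1 : F) != -1.
  by apply: contra (h2) => /eqP h'; exact: two_eq0 h'.
have wm : w != - w.
  apply: contra (h2) => /eqP h.
  have w0 : w = 0.
    have : 2 * w = 0 by rewrite -[X in _ = X](subrr w) {3}h; ring.
    by move/eqP; rewrite mulf_eq0 (negbTE h2) /= => /eqP.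
  move: hw; rewrite w0 expr0n /= => h'; apply/eqP.
  have -> : (2:F) = - (2 * (-1)) by ring.
  by rewrite -h' mulr0 oppr0.
have m1w : (1 : F) != - w by rewrite -[1]opprK eqr_opp eq_sym.
have mw1 : (-1 : F) != - w by rewrite eqr_opp eq_sym.
have hw' : w * w = -1 by rewrite -hw.
have [t] := ubnP #|A|; elim: t A => // t IH A hAt hA h0.
have [-> | [y yA]] := set_0Vmem A; first by rewrite cards0.
have y0 : y != 0 by apply: contraNneq h0 => <-.
pose O := [set x in [:: 1 * y; w * y; -1 * y; - w * y]].
have cO : #|O| = 4%N.
  rewrite cardsE; apply/card_uniqP; rewrite /= !inE !negb_or.
  rewrite !neq_scal //; rewrite eq_sym; exact: w1.
have e1 : w * (w * y) = -1 * y by rewrite mulrA hw'.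
have e2 : w * (-1 * y) = - w * y by ring.
have hO z : z \in O -> - w * z \in O.
  rewrite !inE => /or4P [] /eqP ->.
  - have -> : - w * (1 * y) = - w * y by ring.
    by rewrite eqxx !orbT.
  - have -> : - w * (w * y) = - (w * w) * y by ring.
    by rewrite hw' opprK eqxx.
  - have -> : - w * (-1 * y) = w * y by ring.
    by rewrite eqxx !orbT.
  - have -> : - w * (- w * y) = (w * w) * y by ring.
    by rewrite hw' eqxx !orbT.
have OA : O \subset A.
  apply/subsetP => z; rewrite !inE => /or4P [] /eqP ->.
  - by rewrite mul1r.
  - exact: hA.
  - by rewrite -e1 hA ?hA.
  - by rewrite -e2 -e1 hA ?hA.
have cA : #|A| = (#|A :\: O| + 4)%N.
  by rewrite -cO -(cardsID O A) (setIidPr OA) addnC.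
rewrite cA dvdn_addl //; apply: IH.
- move: hAt; rewrite cA; lia.
- move=> z; rewrite in_setD => /andP [zO zA]; rewrite in_setD hA // andbT.
  apply: contra zO => /hO.
  have -> : - w * (w * z) = - (w * w) * z by ring.
  rewrite hw' opprK mul1r.
  by rewrite inE.
- by rewrite !inE negb_and h0 orbT.
Qed.
Lemma frobN (F : finFieldType) i (x : F) : (- x) ^+ (3 ^ i) = - x ^+ (3 ^ i).
Proof. by rewrite exprNn -signr_odd pow3_odd expr1 mulN1r. Qed.

Lemma frobB (F : finFieldType) (h3 : 3%N \in [pchar F]) i (x y : F) :
  (x - y) ^+ (3 ^ i) = x ^+ (3 ^ i) - y ^+ (3 ^ i).
Proof. by rewrite frobD // frobN. Qed.

Lemma powpow (F : finFieldType) (x : F) a b : (x ^+ (3 ^ a)) ^+ (3 ^ b) = x ^+ (3 ^ (a + b)).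
Proof. by rewrite -exprM -expnD. Qed.

Lemma pow9 (F : finFieldType) (w : F) t : w ^+ (3 ^ 2) = w -> w ^+ (3 ^ (2 * t)) = w.
Proof.
move=> hw; elim: t => [|t IH]; first by rewrite expr1.
by rewrite mulnS addnC -powpow IH hw.
Qed.

Lemma Lmap_add (F : finFieldType) (h3 : 3%N \in [pchar F]) a b l (c e y z : F) :
  Lmap (3 ^ a) (3 ^ b) (3 ^ l) c e (y + z) =
  Lmap (3 ^ a) (3 ^ b) (3 ^ l) c e y + Lmap (3 ^ a) (3 ^ b) (3 ^ l) c e z.
Proof. by rewrite /Lmap !mulrDr !frobD //; ring. Qed.

Lemma Lmap0 (F : finFieldType) a b l (c e : F) :
  Lmap (3 ^ a) (3 ^ b) (3 ^ l) c e 0 = 0.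
Proof. by rewrite /Lmap !(mulr0, expr0n) !expn_eq0 /= !(mulr0, subr0, addr0). Qed.

Lemma Lmap_scal (F : finFieldType) a b l (c e y w : F) : w ^+ (3 ^ 2) = w ->
  Lmap (3 ^ (2 * a)) (3 ^ (2 * b)) (3 ^ (2 * l)) c e (w * y) =
  w * Lmap (3 ^ (2 * a)) (3 ^ (2 * b)) (3 ^ (2 * l)) c e y.
Proof.
move=> hw; rewrite /Lmap !exprMn !(@pow9 _ w _ hw); ring.
Qed.

Lemma Lmap_pow9 (F : finFieldType) (h3 : 3%N \in [pchar F]) m (c e y z : F) :
  z = y ^+ (3 ^ (2 * m.+1)) ->
  (Lmap (3 ^ (2 * (m.+1 + 1))) (3 ^ (2 * m)) (3 ^ (2 * m.+1)) c e y) ^+ (3 ^ 2) =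
  c ^+ (3 ^ 2) * z ^+ (3 ^ 4) + c ^+ (3 ^ (2 * m.+1)) * z
  - (e ^+ (3 ^ 2) + e ^+ (3 ^ (2 * (m.+1 + 1)))) * z ^+ (3 ^ 2).
Proof.
move=> hzy.
have h1 : (y ^+ (3 ^ (2 * (m.+1 + 1)))) ^+ (3 ^ 2) = z ^+ (3 ^ 4).
  by rewrite hzy !powpow; congr (y ^+ (3 ^ _)); lia.
have h2 : (y ^+ (3 ^ (2 * m))) ^+ (3 ^ 2) = z.
  by rewrite hzy !powpow; congr (y ^+ (3 ^ _)); lia.
have h3' : (y ^+ (3 ^ (2 * m.+1))) ^+ (3 ^ 2) = z ^+ (3 ^ 2) by rewrite hzy.
have h4 : (c ^+ (3 ^ (2 * m))) ^+ (3 ^ 2) = c ^+ (3 ^ (2 * m.+1)).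
  by rewrite !powpow; congr (c ^+ (3 ^ _)); lia.
have h5 : (e ^+ (3 ^ (2 * m.+1))) ^+ (3 ^ 2) = e ^+ (3 ^ (2 * (m.+1 + 1))).
  by rewrite !powpow; congr (e ^+ (3 ^ _)); lia.
rewrite /Lmap !(frobB h3, frobD h3) !exprMn h1 h2 h3' h4 h5; ring.
Qed.
Local Open Scope nat_scope.
Lemma powmod1 a M t : (1 < M)%N -> (a %% M = 1)%N -> exists v, (a ^ t = M * v + 1)%N.
Proof.
move=> hM ha; exists (a ^ t %/ M).
have h : (a ^ t %% M = 1)%N by rewrite -modnXm ha exp1n modn_small.
by rewrite {1}(divn_eq (a ^ t) M) h mulnC.
Qed.

Lemma natN1 k : odd k -> exists v, (3 ^ (4 * k) = 80 * (162 * v + 1) + 1)%N.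
Proof.
move=> ok; have [t ->] : exists t, k = (2 * t + 1)%N.
  by exists k./2; rewrite -{1}(odd_double_half k) ok add1n addn1 -mul2n.
have [v hv] := @powmod1 6561 160 t isT erefl.
exists v; have -> : 4 * (2 * t + 1) = 4 + 8 * t by lia.
rewrite expnD expnM (_ : 3 ^ 8 = 6561) // hv; lia.
Qed.

Lemma natN3 k : odd k -> exists u, (3 ^ (2 * k) = 720 * u + 9)%N.
Proof.
move=> ok; have [t ->] : exists t, k = (2 * t + 1)%N.
  by exists k./2; rewrite -{1}(odd_double_half k) ok add1n addn1 -mul2n.
have [u hu] := @powmod1 81 80 t isT erefl.
exists u; have -> : 2 * (2 * t + 1) = 2 + 4 * t by lia.
rewrite expnD expnM (_ : 3 ^ 4 = 81) // hu; lia.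
Qed.

Lemma natD k : odd k -> ((8 * ((3 ^ (2 * k) + 1) ^ 2 %/ 20)) %% 80 = 40)%N.
Proof.
move=> ok; have [u hu] := natN3 ok.
rewrite hu.
have -> : ((720 * u + 9 + 1) ^ 2 %/ 20 = 5 * (72 * u + 1) ^ 2)%N.
  have -> : ((720 * u + 9 + 1) ^ 2 = 5 * (72 * u + 1) ^ 2 * 20)%N by rewrite !expnS expn0; lia.
  by rewrite mulnK.
have -> : ((72 * u + 1) ^ 2 = 2 * (2592 * u * u + 72 * u) + 1)%N by rewrite !expnS expn0; lia.
have -> : (8 * (5 * (2 * (2592 * u * u + 72 * u) + 1)) = (2592 * u * u + 72 * u) * 80 + 40)%N by lia.
by rewrite modnMDl.
Qed.
Local Open Scope ring_scope.
Lemma prim_exists (F : finFieldType) : exists g : F, (#|F|.-1).-primitive_root g.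
Proof.
pose rs := enum [pred x : F | x != 0].
have hn : (0 < #|F|.-1)%N.
  rewrite -subn1 subn_gt0 (cardD1 (0 : F)) (cardD1 (1 : F)) !inE oner_eq0 /=; lia.
have hall : all (#|F|.-1).-unity_root rs.
  apply/allP => x; rewrite mem_enum inE => x0.
  rewrite unity_rootE; apply/eqP; apply: (mulfI x0).
  by rewrite -exprS prednK ?expf_card ?mulr1 // (cardD1 (0 : F)).
have hu : uniq rs by rewrite enum_uniq.
have hs : (#|F|.-1 <= size rs)%N.
  by rewrite -cardE (cardC1 (0 : F)).
have := has_prim_root hn hall hu hs.
by case/hasP => g _ hg; exists g.
Qed.
Lemma euler81 (F : finFieldType) S (hN : #|F| = (80 * S + 1)%N) (r : F) :
  r ^+ 81 = r -> r != 0 -> r ^+ 40 = 1 -> exists s : F, s ^+ 81 = s /\ s ^+ 2 = r.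
Proof.
move=> r81 r0 r40.
have [g hg] := prim_exists F.
rewrite hN addn1 /= in hg.
have r80 : r ^+ 80 = 1 by rewrite (_ : 80 = 40 * 2)%N // exprM r40 expr1n.
have rN : r ^+ (80 * S) = 1 by rewrite exprM r80 expr1n.
have [i hi] := prim_rootP hg rN.
move: r40; rewrite hi -exprM => /eqP; rewrite -(prim_order_dvd hg) => /dvdnP [x hx].
have hi2 : (nat_of_ord i = (S * x) * 2)%N by lia.
exists (g ^+ (S * x)); split.
- rewrite -exprM (_ : (S * x * 81 = S * x + 80 * S * x)%N); last by lia.
  by rewrite exprD [g ^+ (80 * S * x)]exprM (prim_expr_order hg) expr1n mulr1.
- by rewrite -exprM -hi2 -hi.
Qed.
Definition Kset (F : finFieldType) m (c e : F) : {set F} :=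
  [set y | Lmap (3 ^ (2 * (m.+1 + 1))) (3 ^ (2 * m)) (3 ^ (2 * m.+1)) c e y == 0].

Lemma two_neq0 (F : finFieldType) (h3 : 3%N \in [pchar F]) : (2 : F) != 0.
Proof.
apply/eqP => h2; have : (1 : F) = 3%:R - 2 by ring.
by rewrite (pcharf0 h3) h2 subrr; apply/eqP; rewrite oner_eq0.
Qed.

Lemma K_bound (F : finFieldType) (h3 : 3%N \in [pchar F]) m
  (hN : forall x : F, x ^+ (3 ^ (4 * m.+1)) = x) (c e : F) :
  c != 0 -> (#|Kset m c e| <= 81)%N.
Proof.
move=> c0.
pose B := (3 ^ (2 * m.+1))%N.
pose f := fun y : F => y ^+ B.
have finj : injective f.
  apply: (can_inj (g := f)) => y; rewrite /f /B powpow.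
  by rewrite (_ : (2 * m.+1 + 2 * m.+1 = 4 * m.+1)%N) ?hN //; lia.
pose b := e ^+ (3 ^ 2) + e ^+ (3 ^ (2 * (m.+1 + 1))).
pose p : {poly F} := c ^+ (3 ^ 2) *: 'X^(3 ^ 4) + (c ^+ B *: 'X - b *: 'X^(3 ^ 2)).
pose Z := [set z | p.[z] == 0].
have hp z : p.[z] = c ^+ (3 ^ 2) * z ^+ (3 ^ 4) + c ^+ B * z - b * z ^+ (3 ^ 2).
  by rewrite /p !(hornerD, hornerN, hornerZ, hornerXn, hornerX) addrA.
have hs2 : (size ((c ^+ B *: 'X - b *: 'X^(3 ^ 2))%R : {poly F}) < size ((c ^+ (3 ^ 2) *: 'X^(3 ^ 4))%R : {poly F}))%N.
  rewrite size_scale ?expf_neq0 // size_polyXn.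
  apply: leq_ltn_trans (size_polyD _ _) _.
  rewrite gtn_max size_polyN; apply/andP; split.
  - by apply: leq_ltn_trans (size_scale_leq _ _) _; rewrite size_polyX.
  - by apply: leq_ltn_trans (size_scale_leq _ _) _; rewrite size_polyXn.
have hsz : size p = 82%N.
  by rewrite /p size_polyDl // size_scale ?expf_neq0 // size_polyXn.
have p0 : p != 0 by rewrite -size_poly_eq0 hsz.
have hZ : (#|Z| <= 81)%N.
  have hall : all (root p) (enum Z).
    by apply/allP => z; rewrite mem_enum inE.
  by have := max_poly_roots p0 hall (enum_uniq _); rewrite -cardE hsz.
apply: leq_trans hZ; rewrite -(card_imset _ finj); apply: subset_leq_card.
apply/subsetP => z /imsetP [y]; rewrite inE => /eqP hy ->.
rewrite inE hp; apply/eqP.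
have := Lmap_pow9 h3 c e (erefl (f y)); rewrite hy expr0n expn_eq0 /= => h.
by rewrite /f /b /B -h.
Qed.
Lemma K_card (F : finFieldType) (h3 : 3%N \in [pchar F]) m
  (hc : #|F| = (3 ^ (4 * m.+1))%N) (c e w : F) :
  c != 0 -> w ^+ 2 = -1 -> w ^+ (3 ^ 2) = w ->
  #|Kset m c e| \in [:: 1; 9; 81]%N.
Proof.
move=> c0 hw hw9.
have hN : forall x : F, x ^+ (3 ^ (4 * m.+1)) = x by move=> x; rewrite -hc expf_card.
have K0 : (0 : F) \in Kset m c e by rewrite inE Lmap0.
have KD y z : y \in Kset m c e -> z \in Kset m c e -> y + z \in Kset m c e.
  by rewrite !inE Lmap_add // => /eqP -> /eqP ->; rewrite addr0.
have w0 : w != 0.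
  apply/eqP => h; move: hw; rewrite h expr0n /= => /eqP.
  by rewrite eq_sym oppr_eq0 oner_eq0.
have Kw y : y \in Kset m c e :\ 0 -> w * y \in Kset m c e :\ 0.
  rewrite !inE => /andP [y0 /eqP hy]; rewrite mulf_neq0 //=.
  by rewrite Lmap_scal // hy mulr0.
have n0 : (0 : F) \notin Kset m c e :\ 0 by rewrite !inE eqxx.
have h4 := four_dvd (two_neq0 h3) hw Kw n0.
have hb := K_bound h3 hN e c0.
have := addgrp_card K0 KD; rewrite hc => /(dvdn_pfactor _ _ (isT : prime 3)).
have hK : #|Kset m c e| = (#|Kset m c e :\ 0|).+1 by rewrite (cardsD1 (0:F) (Kset m c e)) K0.
case=> j _ hj; move: h4 hb; rewrite hj.
have -> : #|Kset m c e :\ 0| = (3 ^ j).-1 by rewrite -hj hK.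
case: j {hj} => [|[|[|[|[|j]]]]] //.
by rewrite !expnS; lia.
Qed.
Lemma K_triv (F : finFieldType) (h3 : 3%N \in [pchar F]) m
  (hc : #|F| = (3 ^ (4 * m.+1))%N) (om : odd m.+1) (c e : F) :
  c != 0 -> e ^+ (3 ^ 2) + e ^+ (3 ^ (2 * (m.+1 + 1))) = 0 ->
  Kset m c e = [set 0].
Proof.
move=> c0 hb.
apply/setP => y; rewrite !inE; apply/idP/idP; last first.
  by move/eqP ->; rewrite Lmap0.
move=> /eqP hy.
set z := y ^+ (3 ^ (2 * m.+1)).
have := Lmap_pow9 h3 c e (erefl z); rewrite hy hb mul0r subr0 expr0n /= => hz.
have [u hu] := natN3 om.
have [v hv] := natN1 om.
case: (eqVneq z 0) => [z0 | z0].
  by move/eqP: z0; rewrite /z expf_eq0 => /andP [_ /eqP ->].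
exfalso; apply/negP: (two_neq0 h3).
have cu : c ^+ (3 ^ 2 * u) != 0 by rewrite expf_neq0.
pose t := z / c ^+ (3 ^ 2 * u).
have t80 : t ^+ 80 = -1.
  have e1 : c ^+ (3 ^ 2) * (z ^+ 80 + (c ^+ (3 ^ 2 * u)) ^+ 80) * z = 0.
    have E1 : c ^+ (3 ^ (2 * m.+1)) = c ^+ (3 ^ 2) * (c ^+ (3 ^ 2 * u)) ^+ 80.
      rewrite hu -exprM -exprD; congr (c ^+ _); rewrite (_ : 3 ^ 2 = 9)%N //; lia.
    have E2 : z ^+ (3 ^ 4) = z ^+ 80 * z by rewrite -exprSr.
    have -> : c ^+ (3 ^ 2) * (z ^+ 80 + (c ^+ (3 ^ 2 * u)) ^+ 80) * z =
       c ^+ (3 ^ 2) * z ^+ (3 ^ 4) + c ^+ (3 ^ (2 * m.+1)) * z by rewrite E1 E2; ring.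
    by rewrite -hz.
  move/eqP: e1; rewrite mulf_eq0 (negbTE z0) orbF mulf_eq0 expf_eq0 (negbTE c0) andbF /= => /eqP e2.
  rewrite /t expr_div_n; apply: (canLR (mulfK (expf_neq0 _ cu))).
  by rewrite mulN1r; apply/eqP; rewrite -subr_eq0 opprK e2.
have tN : t ^+ (#|F|.-1) = 1.
  have t0 : t != 0 by rewrite /t mulf_neq0 ?invr_eq0.
  apply: (mulfI t0); rewrite -exprS prednK ?expf_card ?mulr1 // (cardD1 (0 : F)) //.
move: tN; rewrite hc hv addn1 /= exprM t80 -signr_odd.
rewrite oddD oddM /= => h; rewrite negbK; apply: two_eq0; rewrite expr1 in h; by rewrite h.
Qed.
Lemma pow81 (F : finFieldType) (w : F) t : w ^+ (3 ^ 4) = w -> w ^+ (3 ^ (4 * t)) = w.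
Proof.
move=> hw; elim: t => [|t IH]; first by rewrite expr1.
by rewrite mulnS addnC -powpow IH hw.
Qed.

Unset Implicit Arguments.

Theorem mainTheorem5 (F : finFieldType) (k : nat) (a r : F) :
  odd k ->
  #|F| = (3 ^ (4 * k))%N ->
  a != 0 ->
  (* r lies in the subfield GF(3^4) of GF(3^n) and is a nonsquare there *)
  r ^+ (3 ^ 4) = r ->
  ~ (exists s : F, s ^+ (3 ^ 4) = s /\ s ^+ 2 = r) ->
  let n := (4 * k)%N in
  let d := ((3 ^ (2 * k) + 1) ^ 2 %/ 20)%N in
  let q1 := fun x : F =>
    tr3 n (a * x ^+ (3 ^ (2 * (k + 1)) + 1) - x ^+ (3 ^ (2 * k) + 1)) in
  let q2 := fun x : F =>
    tr3 n (a * r * x ^+ (3 ^ (2 * (k + 1)) + 1) - r ^+ d * x ^+ (3 ^ (2 * k) + 1)) in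
  qrank n q1 \in [:: n; (n - 2)%N; (n - 4)%N] /\ qrank n q2 = n.
Proof.
case: k => [//|m] ok hc a0 r81 nsq n d q1 q2.
have h3 : 3%N \in [pchar F] := card_finPcharP hc (isT : prime 3).
have e4 : (4 * m.+1 = (4 * m + 3).+1)%N by lia.
have hc' : #|F| = (3 ^ (4 * m + 3).+1)%N by rewrite hc e4.
have r0 : r != 0.
  by apply/eqP => r0; apply: nsq; exists 0; rewrite r0 !expr0n.
have [v hv] := natN1 ok.
have r80 : r ^+ 80 = 1.
  by apply: (mulfI r0); rewrite -exprS mulr1; exact: r81.
have r40 : r ^+ 40 = -1.
  have : (r ^+ 40) ^+ 2 == 1 by rewrite -exprM r80.
  rewrite sqrf_eq1 => /orP [/eqP h | /eqP //].
  have hN : #|F| = (80 * (162 * v + 1) + 1)%N by rewrite hc hv.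
  have r81' : r ^+ 81 = r by rewrite -[in RHS]r81.
  have [s [s1 s2]] := euler81 hN r81' r0 h.
  by exfalso; apply: nsq; exists s; split.
pose w := r ^+ 20.
have hw2 : w ^+ 2 = -1 by rewrite /w -exprM.
have hw9 : w ^+ (3 ^ 2) = w.
  by rewrite /w -exprM (_ : (20 * 3 ^ 2 = 80 * 2 + 20)%N) // exprD exprM r80 expr1n mul1r.
split.
- have hq : forall x, q1 x = tr3 (4 * m + 3).+1
      (a * x ^+ (3 ^ (2 * (m.+1 + 1)) + 1) - 1 * x ^+ (3 ^ (2 * m.+1) + 1)).
    by move=> x; rewrite /q1 /n e4 mul1r.
  have hr : qrad q1 = Kset m a 1.
    by rewrite /Kset; apply: (qrad_eq h3 hc' _ _ hq); lia.
  rewrite /qrank hr.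
  have := K_card h3 hc 1 a0 hw2 hw9.
  rewrite !inE => /or3P [] /eqP ->.
  - by rewrite logn1 subn0 eqxx.
  - by rewrite (pfactorK 2 (isT : prime 3)) eqxx orbT.
  - by rewrite (pfactorK 4 (isT : prime 3)) eqxx !orbT.
have hq : forall x, q2 x = tr3 (4 * m + 3).+1
    (a * r * x ^+ (3 ^ (2 * (m.+1 + 1)) + 1) - r ^+ d * x ^+ (3 ^ (2 * m.+1) + 1)).
  by move=> x; rewrite /q2 /n e4.
have hr : qrad q2 = Kset m (a * r) (r ^+ d).
  by rewrite /Kset; apply: (qrad_eq h3 hc' _ _ hq); lia.
have hm : (2 * (m.+1 + 1) = 4 * (m./2 + 1))%N.
  have := odd_double_half m; move: ok => /= /negbTE -> /=; rewrite add0n -mul2n; lia.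
have hb : (r ^+ d) ^+ (3 ^ 2) + (r ^+ d) ^+ (3 ^ (2 * (m.+1 + 1))) = 0.
  rewrite hm -!exprM.
  have -> : r ^+ (d * 3 ^ (4 * (m./2 + 1))) = r ^+ d by rewrite mulnC exprM pow81.
  have h8 : r ^+ (8 * d) = -1.
    by rewrite -(expr_mod _ r80) natD.
  rewrite (_ : (d * 3 ^ 2 = 8 * d + d)%N); last by rewrite (_ : 3 ^ 2 = 9)%N //; lia.
  by rewrite exprD h8 mulN1r addNr.
rewrite /qrank hr K_triv //; last by rewrite mulf_neq0.
by rewrite cards1 logn1 subn0.
Qed.
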